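(* Let $q$ be a conjunctive query and $q'$ a subquery of $q$ (a subset of its atoms); for a database $i$ for $q$, let $i'$ be its restriction to the relations of $q'$. Let $B$ be any map that assigns to each matching database $i'$ a set $B(i')\subseteq q'(i')$, and assume $\mathbf E[|B(I')|]\le\gamma\,\mathbf E[|q'(I')|]$. Then $\mathbf E[|q(I)\ltimes B(I')|]\le\gamma\,\mathbf E[|q(I)|]$, where $I$ is a uniformly chosen matching database and $I'$ its restriction.
   Context: Conjunctive queries are full and self-join-free; $q(i)$ is the set of assignments to the variables of $q$ satisfying all atoms on database $i$. Matching database over $[n]$: each relation has exactly $n$ tuples and each column contains each value of $[n]$ exactly once; uniformly chosen means each relation independently uniform among such. For $A\subseteq q(i)$ and $B\subseteq q'(i')$ with $\mathrm{atoms}(q')\subseteq\mathrm{atoms}(q)$, the semijoin $A\ltimes B$ is the set of tuples of $A$ whose projection onto the variables of $q'$ lies in $B$. *)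

(* Defs.v *)
From HB Require Import structures.
From mathcomp Require Import all_boot all_order all_algebra.
Set Implicit Arguments. Unset Strict Implicit. Unset Printing Implicit Defensive.
Import Order.TTheory GRing.Theory Num.Theory.

(* A full, self-join-free conjunctive query: a finite set of variables, a
   finite set of atoms (each atom has its own relation symbol, so
   self-join-freeness is built in); atom [a] has arity [arity a] and its
   j-th column carries variable [avar a j]. *)
Record cq := CQ {
  cvar : finType;
  catom : finType;
  arity : catom -> nat;
  avar : forall a : catom, 'I_(arity a) -> cvar }.

Definition db (q : cq) (n : nat) :=
  {dffun forall a : catom q, {set {ffun 'I_(arity a) -> 'I_n}}}.

Definition matching_rel (k n : nat) (R : {set {ffun 'I_k -> 'I_n}}) : bool :=
  (#|R| == n) && [forall c : 'I_k, forall v : 'I_n, #|[set t in R | t c == v]| == 1].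

Definition matching (q : cq) (n : nat) (i : db q n) : bool :=
  [forall a : catom q, matching_rel (i a)].

Definition answers (q : cq) (n : nat) (i : db q n) : {set {ffun cvar q -> 'I_n}} :=
  [set v : {ffun cvar q -> 'I_n} | [forall a : catom q, [ffun j => v (avar j)] \in i a]].

Definition occurs (q : cq) (S : {set catom q}) (x : cvar q) : bool :=
  [exists a in S, exists j : 'I_(arity a), avar j == x].

Definition sub_var (q : cq) (S : {set catom q}) := {x : cvar q | occurs S x}.
Definition sub_atom (q : cq) (S : {set catom q}) := {a : catom q | a \in S}.

Lemma occurs_avar (q : cq) (S : {set catom q}) (a : sub_atom S)
  (j : 'I_(arity (val a))) : occurs S (avar j).
Proof. by apply/existsP; exists (val a); rewrite (valP a) /=; apply/existsP; exists j. Qed.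

Definition subquery (q : cq) (S : {set catom q}) : cq :=
  @CQ (sub_var S) (sub_atom S) (fun a => arity (val a))
      (fun a j => exist _ (avar j) (occurs_avar j)).

Definition restrict (q : cq) (S : {set catom q}) (n : nat) (i : db q n)
  : db (subquery S) n := [ffun a : catom (subquery S) => i (val a)].

Definition proj (q : cq) (S : {set catom q}) (n : nat) (v : {ffun cvar q -> 'I_n})
  : {ffun cvar (subquery S) -> 'I_n} := [ffun x => v (val x)].

Definition semijoin (q : cq) (S : {set catom q}) (n : nat)
  (A : {set {ffun cvar q -> 'I_n}}) (B : {set {ffun cvar (subquery S) -> 'I_n}}) :=
  [set v in A | proj S v \in B].

(* Expectation of f(I) for I a uniformly chosen matching database for q over [n]
   (each relation independently uniform among matching relations, i.e. I uniform
   over the product set of matching databases). *)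
Definition Exp (R : numFieldType) (q : cq) (n : nat) (f : db q n -> R) : R :=
  (\sum_(i : db q n | matching i) f i) / #|[pred i : db q n | matching i]|%:R.

Arguments restrict {q} S {n} i.
Arguments proj {q} S {n} v.

(* Main.v *)
Require Import Defs.
From HB Require Import structures.
From mathcomp Require Import all_boot all_order all_algebra all_fingroup.
From mathcomp Require Import ring.
Import Order.TTheory GRing.Theory Num.Theory.
Set Implicit Arguments. Unset Strict Implicit. Unset Printing Implicit Defensive.


Definition mix (q : cq) (S : {set catom q}) (n : nat) (I I0 : db q n) : db q n :=
  [ffun a => if a \in S then I a else I0 a].

Definition outside (q : cq) (S : {set catom q}) (n : nat) (v : {ffun cvar q -> 'I_n}) (I : db q n) : bool :=
  [forall a, (a \notin S) ==> ([ffun j => v (avar j)] \in I a)].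

Definition ext (q : cq) (S : {set catom q}) (n : nat) (t : {ffun cvar (subquery S) -> 'I_n}) (I : db q n) : nat :=
  #|[set v : {ffun cvar q -> 'I_n} | (proj S v == t) && outside S v I]|.

Lemma answers_split q S n (I : db q n) v :
  (v \in answers I) = (proj S v \in answers (restrict S I)) && outside S v I.
Proof.
rewrite !inE; apply/forallP/andP.
- move=> H; split.
    apply/forallP => a'; rewrite ffunE.
    have -> : [ffun j => proj S v (@avar (subquery S) a' j)] = [ffun j => v (@avar q (val a') j)].
      by apply/ffunP => j; rewrite !ffunE.
    exact: H.
  by apply/forallP => a; apply/implyP => _; exact: H.
- case=> /forallP H1 /forallP H2 a.
  case: (boolP (a \in S)) => Ha; last exact: (implyP (H2 a) Ha).
  have := H1 (exist _ a Ha); rewrite ffunE.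
  have -> : [ffun j => proj S v (@avar (subquery S) (exist _ a Ha) j)] = [ffun j => v (@avar q a j)].
    by apply/ffunP => j; rewrite !ffunE.
  by [].
Qed.


Lemma mixK q S n (I I0 : db q n) : mix S (mix S I I0) (mix S I0 I) = I.
Proof. by apply/ffunP => a; rewrite !ffunE; case: (a \in S). Qed.

Lemma matching_mix q S n (I I0 : db q n) :
  matching (mix S I I0) && matching (mix S I0 I) = matching I && matching I0.
Proof.
apply/andP/andP.
- case=> /forallP H1 /forallP H2; split; apply/forallP => a.
    by have := H1 a; have := H2 a; rewrite !ffunE; case: (a \in S).
  by have := H1 a; have := H2 a; rewrite !ffunE; case: (a \in S).
- case=> /forallP H1 /forallP H2; split; apply/forallP => a; rewrite ffunE;
  by case: (a \in S).
Qed.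

Lemma restrict_mix q S n (I I0 : db q n) : restrict S (mix S I I0) = restrict S I.
Proof. by apply/ffunP => a; rewrite !ffunE (valP a). Qed.

Lemma ext_mix q S n (t : {ffun cvar (subquery S) -> 'I_n}) (I I0 : db q n) : ext t (mix S I0 I) = ext t I.
Proof.
rewrite /ext; apply: eq_card => v; rewrite !inE; congr (_ && _).
apply/forallP/forallP => H a; have := H a; rewrite ffunE;
by case: (boolP (a \in S)).
Qed.

Lemma sum_prod q S n (g h : db q n -> nat) :
  (forall I I0, g (mix S I I0) = g I) -> (forall I I0, h (mix S I0 I) = h I) ->
  ((\sum_(I | matching I) g I) * (\sum_(I | matching I) h I) =
   #|[pred I : db q n | matching I]| * \sum_(I | matching I) g I * h I)%N.
Proof.
move=> Hg Hh.
rewrite big_distrl /=.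
under eq_bigr do rewrite big_distrr /=.
rewrite pair_big_dep /=.
pose phi := fun p : db q n * db q n => (mix S p.1 p.2, mix S p.2 p.1).
have phiK : involutive phi by case=> I I0; rewrite /phi /= !mixK.
rewrite (reindex_inj (inv_inj phiK)) /=.
rewrite (eq_bigl (fun p => matching p.1 && matching p.2)); last first.
  by case=> I I0 /=; rewrite matching_mix.
under eq_bigr do rewrite Hg Hh.
rewrite -(pair_big (fun I : db q n => matching I) (fun I : db q n => matching I) (fun I (_ : db q n) => g I * h I)) /=.
by rewrite exchange_big /= sum_nat_const.
Qed.


Definition pmt (q : cq) n (s : cvar q -> {perm 'I_n}) (a : catom q)
  (t : {ffun 'I_(arity a) -> 'I_n}) : {ffun 'I_(arity a) -> 'I_n} :=
  [ffun j => s (avar j) (t j)].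

Definition permdb (q : cq) n (s : cvar q -> {perm 'I_n}) (I : db q n) : db q n :=
  [ffun a => @pmt q n s a @: I a].

Definition sinv (q : cq) n (s : cvar q -> {perm 'I_n}) := fun x => (s x)^-1%g.

Lemma pmtK q n s a : cancel (@pmt q n s a) (@pmt q n (sinv s) a).
Proof. by move=> t; apply/ffunP => j; rewrite !ffunE permK. Qed.

Lemma pmt_inj q n s a : injective (@pmt q n s a).
Proof. exact: can_inj (@pmtK q n s a). Qed.

Lemma permdbK q n s : cancel (@permdb q n s) (permdb (sinv s)).
Proof.
move=> I; apply/ffunP => a; rewrite !ffunE -imset_comp.
rewrite (eq_imset _ (@pmtK q n s a)); exact: imset_id.
Qed.

Lemma matching_permdb q n s (I : db q n) : matching I -> matching (permdb s I).
Proof.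
move=> /forallP H; apply/forallP => a; have /andP [/eqP c1 /forallP c2] := H a.
rewrite ffunE; apply/andP; split.
  by rewrite card_imset ?c1 //; exact: pmt_inj.
apply/forallP => c; apply/forallP => v.
rewrite -(card_preimset _ (@pmt_inj q n s a)).
have /forallP/(_ ((s (avar c))^-1%g v)) := c2 c.
congr (_ == 1); apply: eq_card => t; rewrite !inE mem_imset; last exact: pmt_inj.
rewrite ffunE; congr (_ && _).
by rewrite -[in RHS](permKV (s (avar c)) v) (inj_eq perm_inj).
Qed.

Lemma matching_permdbE q n s (I : db q n) : matching (permdb s I) = matching I.
Proof.
apply/idP/idP; last exact: matching_permdb.
by move/(matching_permdb (sinv s)); rewrite permdbK.
Qed.


Definition sp (q : cq) (S : {set catom q}) n (s : cvar q -> {perm 'I_n})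
  (t : {ffun cvar (subquery S) -> 'I_n}) : {ffun cvar (subquery S) -> 'I_n} :=
  [ffun y => s (val y) (t y)].

Definition vp (q : cq) n (s : cvar q -> {perm 'I_n}) (v : {ffun cvar q -> 'I_n})
  : {ffun cvar q -> 'I_n} := [ffun x => s x (v x)].

Lemma vp_inj q n s : injective (@vp q n s).
Proof.
apply: (can_inj (g := @vp q n (sinv s))) => v; apply/ffunP => x.
by rewrite !ffunE permK.
Qed.

Lemma sp_inj q S n s : injective (@sp q S n s).
Proof.
apply: (can_inj (g := @sp q S n (sinv s))) => v; apply/ffunP => x.
by rewrite !ffunE permK.
Qed.

Lemma ext_permdb q S n s (t : {ffun cvar (subquery S) -> 'I_n}) (I : db q n) :
  ext (sp s t) (permdb s I) = ext t I.
Proof.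
rewrite /ext -(card_preimset _ (@vp_inj q n s)); apply: eq_card => v; rewrite !inE.
congr (_ && _).
  have -> : proj S (vp s v) = sp s (proj S v) by apply/ffunP => y; rewrite !ffunE.
  exact: (inj_eq (@sp_inj q S n s)).
have E a : [ffun j => vp s v (@avar q a j)] = pmt s [ffun j => v (@avar q a j)].
  by apply/ffunP => j; rewrite !ffunE.
apply: eq_forallb => a; rewrite ffunE E mem_imset //; exact: pmt_inj.
Qed.

Lemma ext_sum_const q S n (t1 t2 : {ffun cvar (subquery S) -> 'I_n}) :
  \sum_(I : db q n | matching I) ext t1 I = \sum_(I : db q n | matching I) ext t2 I.
Proof.
pose s := fun x : cvar q => if (insub x : option (cvar (subquery S))) is Some y
  then tperm (t1 y) (t2 y) else 1%g.
have st : sp s t1 = t2.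
  by apply/ffunP => y; rewrite ffunE /s valK tpermL.
rewrite [RHS](reindex_inj (can_inj (@permdbK q n s))) /=.
apply: eq_big => I; first by rewrite matching_permdbE.
by move=> _; rewrite -st ext_permdb.
Qed.


Lemma matching_restrict q S n (I : db q n) : matching I -> matching (restrict S I).
Proof. by move=> /forallP H; apply/forallP => a; rewrite ffunE; exact: H. Qed.

Lemma sj_decomp q S n (Bs : {set {ffun cvar (subquery S) -> 'I_n}}) (I : db q n) :
  Bs \subset answers (restrict S I) ->
  #|semijoin (answers I) Bs| = \sum_(t in Bs) ext t I.
Proof.
move=> HB.
rewrite -sum1_card (partition_big (proj S) (mem Bs)) /=; last first.
  by move=> v; rewrite inE => /andP[].
apply: eq_bigr => t Ht; rewrite /ext -sum1_card; apply: eq_bigl => v.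
rewrite [X in _ = X]inE /semijoin inE (answers_split S).
apply/andP/andP => [[/andP[/andP[Ha Ho] Hb] E]|[/eqP E Ho]]; first by [].
split; last by rewrite E.
by rewrite E Ht (subsetP HB _ Ht) andbT /=.
Qed.

Lemma sum_ind (T : finType) (A : {set T}) : (\sum_(t : T) (t \in A) = #|A|)%N.
Proof. by rewrite -sum1_card [RHS]big_mkcond; apply: eq_bigr => t _; case: (t \in A). Qed.

Definition Cst (q : cq) (S : {set catom q}) (n : nat) : nat :=
  if [pick t : {ffun cvar (subquery S) -> 'I_n}] is Some t0 then
    \sum_(I : db q n | matching I) ext t0 I else 0.

Lemma Cst_ok q S n (t : {ffun cvar (subquery S) -> 'I_n}) :
  \sum_(I : db q n | matching I) ext t I = Cst S n.
Proof.
rewrite /Cst; case: pickP => [t0 _|/(_ t)//]; exact: ext_sum_const.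
Qed.

Lemma main_count q S n
  (Bf : db (subquery S) n -> {set {ffun cvar (subquery S) -> 'I_n}}) :
  (forall J, matching J -> Bf J \subset answers J) ->
  (#|[pred I : db q n | matching I]| *
     \sum_(I : db q n | matching I) #|semijoin (answers I) (Bf (restrict S I))| =
   Cst S n * \sum_(I : db q n | matching I) #|Bf (restrict S I)|)%N.
Proof.
move=> HB.
rewrite (eq_bigr (fun I => \sum_t (t \in Bf (restrict S I)) * ext t I)); last first.
  move=> I HI; rewrite sj_decomp; last exact/HB/matching_restrict.
  by rewrite big_mkcond; apply: eq_bigr => t _; case: (t \in _); rewrite ?mul1n ?mul0n.
rewrite exchange_big big_distrr /=.
under eq_bigr => t _.
  rewrite -(@sum_prod q S n (fun I => nat_of_bool (t \in Bf (restrict S I))) (ext t)); last first.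
  - by move=> I I0; rewrite ext_mix.
  - by move=> I I0; rewrite restrict_mix.
  rewrite Cst_ok.
over.
rewrite -big_distrl /= mulnC; congr (_ * _).
rewrite exchange_big /=; apply: eq_bigr => I _; exact: sum_ind.
Qed.

Local Open Scope ring_scope.

Theorem lemma11 (R : realFieldType) (q : cq) (S : {set catom q}) (n : nat)
  (B : db (subquery S) n -> {set {ffun cvar (subquery S) -> 'I_n}}) (gamma : R) :
  (forall i' : db (subquery S) n, matching i' -> B i' \subset answers i') ->
  Exp (fun I : db q n => #|B (restrict S I)|%:R)
    <= gamma * Exp (fun I : db q n => #|answers (restrict S I)|%:R) ->
  Exp (fun I : db q n => #|semijoin (answers I) (B (restrict S I))|%:R)
    <= gamma * Exp (fun I : db q n => #|answers I|%:R).
Proof.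
move=> HB Hyp.
have E1 := main_count HB.
have E2 := @main_count q S n (@answers _ n) (fun J _ => subxx _).
have eY : (\sum_(I : db q n | matching I) #|semijoin (answers I) (answers (restrict S I))| =
          \sum_(I : db q n | matching I) #|answers I|)%N.
  apply: eq_bigr => I _; apply: eq_card => v; rewrite /semijoin inE.
  by case Hv: (v \in answers I) => //=; move: Hv; rewrite (answers_split S) => /andP[].
rewrite eY in E2.
move: E1 E2 Hyp; rewrite /Exp -!natr_sum.
set N := #|_|.
set C := Cst S n.
set sX := (\sum_(I | matching I) #|semijoin _ _|)%N.
set sY := (\sum_(I | matching I) #|answers I|)%N.
set sB := (\sum_(I | matching I) #|B _|)%N.
set sA := (\sum_(I | matching I) #|answers (restrict S I)|)%N.
case: (posnP N) => [->|Npos].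
  by rewrite !invr0 !mulr0.
move=> /(congr1 (fun k => k%:R : R)) E1 /(congr1 (fun k => k%:R : R)) E2 H.
rewrite !natrM in E1 E2.
have Nn : N%:R != 0 :> R by rewrite pnatr_eq0 -lt0n.
have hX : sX%:R / N%:R = (C%:R / N%:R) * (sB%:R / N%:R) :> R.
  rewrite -[sX%:R](mulKf Nn) E1; field; exact: Nn.
have hY : sY%:R / N%:R = (C%:R / N%:R) * (sA%:R / N%:R) :> R.
  rewrite -[sY%:R](mulKf Nn) E2; field; exact: Nn.
rewrite hX hY [in X in _ <= X]mulrCA; apply: ler_wpM2l => //.
by rewrite divr_ge0 // ler0n.
Qed.
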